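(* Let $n\ge 1$, let $\Omega_1,\ldots,\Omega_n$ be finite sets with $|\Omega_i|=k_i\ge 1$, and let $\Omega=\prod_{i=1}^n\Omega_i$. Let $M\ge 0$ and let $f:\Omega\to[0,M]$ be weakly nested canalizing (WNC) on $\Omega$. Put $\kappa=\max_i (k_i-1)/k_i$, so that $\kappa<1$. Then $$\operatorname{AS}[f]\le \frac{M^2}{4(1-\kappa)}.$$ In particular this holds for every nested canalizing function $f:(\mathbb{Z}/k\mathbb{Z})^n\to\mathbb{Z}/k\mathbb{Z}$, with values viewed as the real numbers $0,\ldots,k-1$ (here $M=k-1$ and $\kappa=(k-1)/k$).
   Context: Let $\Omega_1,\ldots,\Omega_n$ be finite sets with $|\Omega_i|=k_i\ge1$ (sizes $k_i=1$ are allowed), $\Omega=\prod_i\Omega_i$, and let $f:\Omega\to\mathbb{R}$. Weakly canalizing: $f$ is weakly canalizing with respect to coordinate $i$ and $(a,b)\in\Omega_i\times\mathbb{R}$ if $f(x)=b$ for every $x\in\Omega$ with $x_i=a$. No condition is imposed on the values of $f$ when $x_i\ne a$; in particular constant functions are weakly canalizing. Restriction: if $k_i\ge2$, then $f\restriction_{x_i\ne a}$ denotes the restriction of $f$ to $\Omega\cap\{x: x_i\ne a\}=\Omega_1\times\cdots\times(\Omega_i\setminus\{a\})\times\cdots\times\Omega_n$, regarded again as a product of finite sets. WNC, defined by induction on $|\Omega|$: if $|\Omega|=1$, every $f$ is WNC on $\Omega$. If $|\Omega|>1$, $f$ is WNC on $\Omega$ if it is weakly canalizing with respect to some $i,a,b$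 with $k_i\ge2$ and $f\restriction_{x_i\ne a}$ is WNC on $\Omega\cap\{x:x_i\ne a\}$. Nested canalizing (NC): a segment is a subset of $\mathbb{Z}/k\mathbb{Z}=\{0,\ldots,k-1\}$ of the form $\{0,\ldots,i\}$ or $\{i,\ldots,k-1\}$. A function $f:(\mathbb{Z}/k\mathbb{Z})^n\to\mathbb{Z}/k\mathbb{Z}$ (with $k\ge2$) is NC if there exist a permutation $\sigma$ of $\{1,\ldots,n\}$, segments $A_1,\ldots,A_n$ and values $c_1,\ldots,c_{n+1}\in\mathbb{Z}/k\mathbb{Z}$ with $c_n\ne c_{n+1}$ such that: - $f(x)=c_r$ whenever $x_{\sigma(1)}\notin A_1,\ldots,x_{\sigma(r-1)}\notin A_{r-1}$ and $x_{\sigma(r)}\in A_r$, for $1\le r\le n$; - $f(x)=c_{n+1}$ whenever $x_{\sigma(r)}\notin A_r$ for all $r$. Average sensitivity: $\Omega$ carries the uniform product probability measure. For $x\in\Omega$ and a coordinate $i$, let $\operatorname{Var}_i[f](x)$ be the variance of $y_i\mapsto f(x_1,\ldots,x_{i-1},y_i,x_{i+1},\ldots,x_n)$ for $y_i$ uniform on $\Omega_i$. The influence of coordinate $i$ is $\operatorname{Inf}_i[f]=\mathbf{E}_x[\operatorname{Var}_i[f](x)]$. This equals the Fourier-analytic definition $\langle f,L_if\rangle=\sum_{\alpha_i\ne0}\hat f(\alpha)^2$ for any orthonormal basis $(\phi_\alpha)$ with $\phi_0=1$. The average sensitivity (total influence) is $\operatorname{AS}[f]=\sum_{i=1}^n\operatorname{Inf}_i[f]$.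 *)

(* Defs.v *)
From HB Require Import structures.
From mathcomp Require Import all_boot all_order fingroup perm all_algebra.
Set Implicit Arguments. Unset Strict Implicit. Unset Printing Implicit Defensive.
Import Order.TTheory GRing.Theory Num.Theory.
Local Open Scope ring_scope.

Section Product.
Variables (n : nat) (Om : 'I_n -> finType).

Definition Omega := {dffun forall i : 'I_n, Om i}.

Definition upd (x : Omega) (i : 'I_n) (y : Om i) : Omega :=
  [ffun j => dfwith (fun j => x j) y j].

Definition inbox (B : forall j : 'I_n, {set Om j}) (x : Omega) : bool :=
  [forall j, x j \in B j].

(* the box with the value a removed from the i-th factor *)
Definition remove (B : forall j : 'I_n, {set Om j}) (i : 'I_n) (a : Om i) :
  forall j : 'I_n, {set Om j} :=
  fun j => [set v in B j | Tagged Om v != Tagged Om a].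

Variable R : realFieldType.

Definition weakly_canalizing_on (f : Omega -> R) (B : forall j, {set Om j})
  (i : 'I_n) (a : Om i) (b : R) : Prop :=
  forall x, inbox B x -> x i = a -> f x = b.

(* The inductive definition is the least predicate closed under the
   two clauses of the paper's definition by induction on |B|. *)
Inductive WNC_on (f : Omega -> R) : (forall j, {set Om j}) -> Prop :=
| WNC_one (B : forall j, {set Om j}) : (forall j, #|B j| = 1%N) -> WNC_on f B
| WNC_step (B : forall j, {set Om j}) (i : 'I_n) (a : Om i) (b : R) :
    (1 < #|B i|)%N -> a \in B i ->
    weakly_canalizing_on f B a b ->
    WNC_on f (remove B a) -> WNC_on f B.

Definition WNC (f : Omega -> R) : Prop := WNC_on f (fun j => [set: Om j]).

Definition Var_i (f : Omega -> R) (i : 'I_n) (x : Omega) : R :=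
  let mean := (\sum_(y : Om i) f (upd x y)) / #|Om i|%:R in
  (\sum_(y : Om i) (f (upd x y) - mean) ^+ 2) / #|Om i|%:R.

Definition Inf (f : Omega -> R) (i : 'I_n) : R :=
  (\sum_(x : Omega) Var_i f i x) / #|Omega|%:R.

Definition AS (f : Omega -> R) : R := \sum_(i < n) Inf f i.

(* kappa = max_i (k_i - 1)/k_i  (all these are >= 0) *)
Definition kappa : R :=
  \big[Num.max/0]_(i < n) ((#|Om i|%:R - 1) / #|Om i|%:R).

End Product.

Definition segment (k : nat) (A : {set 'I_k}) : Prop :=
  exists i : 'I_k, A = [set j : 'I_k | (j <= i)%N] \/ A = [set j : 'I_k | (i <= j)%N].

Definition cube (n k : nat) := Omega (fun _ : 'I_n => 'I_k).

(* sigma : permutation of the coordinates; A r = A_{r+1};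
   c r = c_{r+1} for r < n, c ord_max = c_{n+1}. *)
Definition NC (n k : nat) (g : cube n k -> 'I_k) : Prop :=
  exists (sigma : 'S_n) (A : 'I_n -> {set 'I_k}) (c : 'I_n.+1 -> 'I_k),
    (forall r, segment (A r)) /\
    c (inord n.-1) != c ord_max /\
    (forall (r : 'I_n) (x : cube n k),
        (forall s : 'I_n, (s < r)%N -> x (sigma s) \notin A s) ->
        x (sigma r) \in A r -> g x = c (widen_ord (leqnSn n) r)) /\
    (forall x : cube n k, (forall r : 'I_n, x (sigma r) \notin A r) -> g x = c ord_max).

(* Main.v *)
Require Import Defs.
From HB Require Import structures.
From mathcomp Require Import all_boot all_order fingroup perm all_algebra.
From mathcomp Require Import ring lra zify.
Import Order.TTheory GRing.Theory Num.Theory.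
Set Implicit Arguments. Unset Strict Implicit. Unset Printing Implicit Defensive.

Module MA.
Import Order.TTheory GRing.Theory Num.Theory.
Local Open Scope ring_scope.

Section Basic.
Variables (n : nat) (Om : 'I_n -> finType).
Implicit Types (x : Omega Om) (B : forall j : 'I_n, {set Om j}).

Lemma upd_same x i (y : Om i) : upd x y i = y.
Proof. by rewrite /upd ffunE dfwith_in. Qed.

Lemma upd_other x i (y : Om i) j : i != j -> upd x y j = x j.
Proof. by move=> ij; rewrite /upd ffunE dfwith_out. Qed.

Lemma upd_upd x i (y z : Om i) : upd (upd x y) z = upd x z.
Proof.
apply/ffunP=> j; rewrite !ffunE; case: (dfwithP (fun j => upd x y j) z j); first by rewrite dfwith_in.
move=> j' ij; by rewrite upd_other // dfwith_out.
Qed.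

Lemma upd_id x i : upd x (x i) = x.
Proof.
apply/ffunP=> j; rewrite ffunE; by case: (dfwithP (fun j => x j) (x i) j).
Qed.

Lemma upd_eq x i (y : Om i) x' : (upd x y == x') = (x' i == y) && (upd x' (x i) == x).
Proof.
apply/eqP/andP => [<-|[/eqP<- /eqP <-]]; last by rewrite upd_upd upd_id.
by rewrite upd_same upd_upd upd_id.
Qed.

Lemma inbox_upd B x i (y : Om i) :
  inbox B (upd x y) = (y \in B i) && [forall j, (j != i) ==> (x j \in B j)].
Proof.
apply/forallP/andP => [H|[Hy /forallP H] j].
  split; first by have := H i; rewrite upd_same.
  apply/forallP=> j; apply/implyP=> ji; have := H j; rewrite upd_other //.
  by rewrite eq_sym.
case: (eqVneq i j) => [<-|ij]; first by rewrite upd_same.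
by rewrite upd_other //; have := H j; rewrite eq_sym ij.
Qed.

Lemma inbox_updP B x i (y : Om i) : inbox B x -> y \in B i -> inbox B (upd x y).
Proof.
move=> /forallP H Hy; rewrite inbox_upd Hy; apply/forallP=> j; exact/implyP.
Qed.

Lemma inbox_upd_i B x i (y : Om i) : inbox B (upd x y) -> y \in B i.
Proof. by rewrite inbox_upd => /andP[]. Qed.

Lemma inbox_upd_upd B x i (y z : Om i) : inbox B (upd x y) -> z \in B i -> inbox B (upd x z).
Proof. by rewrite !inbox_upd => /andP[_ ->] ->. Qed.

Lemma inbox_i B x i : inbox B x -> x i \in B i.
Proof. by move/forallP. Qed.

Lemma inbox_remove B i (a : Om i) x : inbox (remove B a) x = inbox B x && (x i != a).
Proof.
apply/forallP/andP => [H|[/forallP H xa] j].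
  split; first by apply/forallP=> j; have := H j; rewrite inE => /andP[].
  by have := H i; rewrite inE => /andP[_]; rewrite eq_Tagged.
rewrite inE H /=; case: (eqVneq i j) => [ij|ij]; first by subst j; rewrite eq_Tagged.
by apply: contra ij => /eqP[->].
Qed.

Lemma remove_other B i (a : Om i) j : i != j -> remove B a j = B j.
Proof.
move=> ij; apply/setP=> v; rewrite inE; case: (v \in B j) => //=.
by apply/negP=> /eqP[E]; rewrite E eqxx in ij.
Qed.

Lemma remove_same B i (a : Om i) : remove B a i = B i :\ a.
Proof. by apply/setP=> v; rewrite !inE eq_Tagged andbC. Qed.

End Basic.

End MA.
Import MA.

Module MB.
Import Order.TTheory GRing.Theory Num.Theory.
Local Open Scope ring_scope.

Section Fiber.
Variables (n : nat) (Om : 'I_n -> finType) (R : realFieldType).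
Implicit Types (x : Omega Om) (B : forall j : 'I_n, {set Om j}).

Lemma upd_eq_self x i (a : Om i) : (upd x a == x) = (x i == a).
Proof.
apply/eqP/eqP => [<-|<-]; first by rewrite upd_same.
exact: upd_id.
Qed.

Lemma fiber B i (a0 : Om i) (H : Omega Om -> R) : a0 \in B i ->
  \sum_(x | inbox B x) H x =
  \sum_(x | inbox B x && (x i == a0)) \sum_(y in B i) H (upd x y).
Proof.
move=> Ha0.
rewrite (partition_big (fun x => x i) (fun y => y \in B i)); last by move=> x; apply: inbox_i.
rewrite [RHS]exchange_big /=; apply: eq_bigr => y Hy.
rewrite (reindex_onto (fun x => upd x y) (fun x => upd x a0)); last first.
  by move=> x /andP[_ /eqP xy]; rewrite upd_upd -xy upd_id.
apply: eq_bigl => x; rewrite upd_same eqxx andbT upd_upd upd_eq_self.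
case: (eqVneq (x i) a0) => [xa|]; rewrite ?andbF //= andbT.
apply/idP/idP => Hb.
  by rewrite -(upd_id x i) xa andbT; apply: inbox_upd_upd Hb Ha0.
by rewrite andbT in Hb; apply: inbox_updP.
Qed.

End Fiber.

End MB.
Import MB.

Module MC.
Import Order.TTheory GRing.Theory Num.Theory.
Local Open Scope ring_scope.

Lemma alg_step (R : realFieldType) (k c E X Y N0 M : R) : 2 <= k -> 0 < c -> c * k <= 1 ->
  0 <= X -> 0 <= N0 -> Y <= (k - 1) * M ^+ 2 * N0 ->
  E + X / (k - 1) <= (k - 1) * N0 * M ^+ 2 / (2 * c) ->
  E + (X + 2 * Y) / k <= k * N0 * M ^+ 2 / (2 * c).
Proof.
move=> k2 c0 ck X0 N00 HY HE.
have k0 : 0 < k by lra.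
have k10 : 0 < k - 1 by lra.
set u := k^-1; set v := (k - 1)^-1; set w := (2 * c)^-1.
have hu : k * u = 1 by rewrite /u mulfV // gt_eqF.
have hv : (k - 1) * v = 1 by rewrite /v mulfV // gt_eqF.
have hw : (2 * c) * w = 1 by rewrite /w mulfV // gt_eqF //; lra.
have u0 : 0 < u by rewrite /u invr_gt0.
have w0 : 0 < w by rewrite /w invr_gt0; lra.
have uv : u <= v by rewrite /u /v lef_pV2 ?posrE //; lra.
have uw : 2 * (k - 1) * u <= w.
  have : 4 * c * (k - 1) <= k by nra.
  move=> h.
  have uw0 : 0 <= u * w by apply: mulr_ge0; lra.
  have h2 := ler_wpM2r uw0 h.
  have e1 : 4*c*(k-1)*(u*w) = 2*(k-1)*u * ((2*c)*w) by ring.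
  have e2 : k*(u*w) = (k*u)*w by ring.
  by rewrite e1 e2 hw hu mulr1 mul1r in h2.
have M0 : 0 <= M ^+ 2 by apply: sqr_ge0.
have f1 : X * u <= X * v by apply: ler_wpM2l.
have f2 : 2 * (k - 1) * u * (N0 * M ^+ 2) <= w * (N0 * M ^+ 2).
  by apply: ler_wpM2r => //; apply: mulr_ge0.
have f3 : u * Y <= u * ((k - 1) * M ^+ 2 * N0) by apply: ler_wpM2l => //; lra.
rewrite -/u -/w /= in HE *.
rewrite -!mulrA in HE *.
rewrite /v in f1; rewrite -/v in HE.
nra.
Qed.

Lemma alg_step2 (R : realFieldType) (k c E X Y N0 M : R) : 1 <= k -> 0 < c -> c * (k + 1) <= 1 ->
  0 <= X -> 0 <= N0 -> Y <= k * M ^+ 2 * N0 ->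
  k * X / k ^+ 2 + E <= k * N0 * M ^+ 2 / (2 * c) ->
  (k + 1) * (X + 2 * Y) / (k + 1) ^+ 2 + E <= (k + 1) * N0 * M ^+ 2 / (2 * c).
Proof.
move=> k1 c0 ck X0 N00 HY HE.
have e1 : k * X / k ^+ 2 = X / (k + 1 - 1).
  rewrite addrK; field; apply/eqP; lra.
have e2 : (k + 1) * (X + 2 * Y) / (k + 1) ^+ 2 = (X + 2 * Y) / (k + 1).
  field; apply/eqP; lra.
rewrite e2 addrC; rewrite e1 addrC in HE.
apply: alg_step => //; rewrite ?addrK //.
all: try lra.
by rewrite addrK in HE.
Qed.

Section Main.
Variables (n : nat) (Om : 'I_n -> finType) (R : realFieldType).
Variables (f : Omega Om -> R) (M : R).
Hypothesis hf : forall x, 0 <= f x <= M.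
Implicit Types (x : Omega Om) (B : forall j : 'I_n, {set Om j}).

Definition Tsum x i (S : {set Om i}) :=
  \sum_(y in S) \sum_(z in S) (f (upd x y) - f (upd x z)) ^+ 2.
Definition Dj B i := \sum_(x | inbox B x) Tsum x (B i).
Definition D B := \sum_(i < n) Dj B i / (#|B i|%:R ^+ 2).
Definition N B := \sum_(x | inbox B x) (1 : R).

Lemma Tsum_upd x i (w : Om i) (S : {set Om i}) : Tsum (upd x w) S = Tsum x S.
Proof. by apply: eq_bigr => y _; apply: eq_bigr => z _; rewrite !upd_upd. Qed.

Lemma Tsum_ge0 x i (S : {set Om i}) : 0 <= Tsum x S.
Proof. by apply: sumr_ge0 => y _; apply: sumr_ge0 => z _; apply: sqr_ge0. Qed.

Lemma fiber_const B i (a0 : Om i) (F : Omega Om -> R) : a0 \in B i ->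
  (forall x (w : Om i), F (upd x w) = F x) ->
  \sum_(x | inbox B x) F x = #|B i|%:R * \sum_(x | inbox B x && (x i == a0)) F x.
Proof.
move=> Ha0 HF; rewrite (fiber F Ha0) mulr_sumr; apply: eq_bigr => x _.
under eq_bigr do rewrite HF.
by rewrite sumr_const mulr_natl.
Qed.

Lemma Dj_other B i (a : Om i) b j : weakly_canalizing_on f B a b -> i != j ->
  Dj B j = Dj (remove B a) j.
Proof.
move=> Hc ij; rewrite /Dj remove_other // (bigID (fun x => x i == a)) /=.
rewrite big1 ?add0r; last first.
  move=> x /andP[xB /eqP xa]; apply: big1 => y yB; apply: big1 => z zB.
  rewrite (Hc (upd x y)) ?(Hc (upd x z)) ?subrr ?expr0n ?upd_other 1?eq_sym //.
  - exact: inbox_updP xB zB.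
  - exact: inbox_updP xB yB.
apply: eq_big => // x; by rewrite inbox_remove.
Qed.

Lemma sq_le (u v : R) : 0 <= u <= M -> 0 <= v <= M -> (u - v) ^+ 2 <= M ^+ 2.
Proof. move=> /andP[? ?] /andP[? ?]; nra. Qed.


Section Step.
Variables (B : forall j : 'I_n, {set Om j}) (i : 'I_n) (a a0 : Om i) (b : R).
Hypotheses (Hc : weakly_canalizing_on f B a b) (Ha : a \in B i) (Ha0 : a0 \in B i :\ a).

Definition U x := \sum_(z in B i :\ a) (b - f (upd x z)) ^+ 2.

Lemma fa x : inbox B x -> f (upd x a) = b.
Proof. by move=> xB; apply: Hc; [apply: inbox_updP | rewrite upd_same]. Qed.

Lemma Tsum_split x : inbox B x ->
  Tsum x (B i) = Tsum x (B i :\ a) + 2 * U x.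
Proof.
move=> xB; rewrite /Tsum /U (big_setD1 _ Ha) (big_setD1 _ Ha) /= fa // subrr expr0n add0r.
under [X in _ + X = _]eq_bigr => y _ do rewrite (big_setD1 _ Ha) fa //.
rewrite big_split /=.
under [X in _ + (X + _) = _]eq_bigr => y _ do rewrite -sqrrN opprB.
lra.
Qed.

Lemma Ha0' : a0 \in B i.
Proof. by move: Ha0; rewrite inE => /andP[]. Qed.

Lemma sumB (F : Omega Om -> R) : (forall x (w : Om i), F (upd x w) = F x) ->
  \sum_(x | inbox B x) F x =
  (#|B i :\ a|%:R + 1) * \sum_(x | inbox B x && (x i == a0)) F x.
Proof.
move=> HF; rewrite (fiber_const Ha0' HF); congr (_ * _).
by rewrite (cardsD1 a) Ha natrD addrC.
Qed.

Lemma sumB' (F : Omega Om -> R) : (forall x (w : Om i), F (upd x w) = F x) ->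
  \sum_(x | inbox (remove B a) x) F x =
  #|B i :\ a|%:R * \sum_(x | inbox B x && (x i == a0)) F x.
Proof.
move=> HF; have H0 : a0 \in remove B a i by rewrite remove_same.
rewrite (fiber_const H0 HF) remove_same; congr (_ * _).
apply: eq_big => // x; rewrite inbox_remove.
case: (eqVneq (x i) a0) => [->|]; rewrite ?andbF ?andbT //.
by move: Ha0; rewrite !inE => /andP[->]; rewrite andbT.
Qed.

End Step.

Lemma D_split B i : D B = Dj B i / (#|B i|%:R ^+ 2) +
  \sum_(j < n | j != i) Dj B j / (#|B j|%:R ^+ 2).
Proof. by rewrite /D (bigD1 i). Qed.

Lemma N_ge0 B : 0 <= N B.
Proof. by apply: sumr_ge0. Qed.

Lemma main_WNC B : WNC_on f B -> forall c : R, 0 < c ->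
  (forall j, c * #|B j|%:R <= 1) -> D B <= N B * M ^+ 2 / (2 * c).
Proof.
elim => [{}B H1 | {}B i a b Hk Ha Hc _ IH] c c0 Hcb.
  rewrite /D big1; last first.
    move=> j _; rewrite /Dj big1 ?mul0r // => x _.
    have /cards1P [v ->] : #|B j| == 1%N by rewrite H1.
    rewrite /Tsum big_set1 big_set1 subrr expr0n //.
  apply: mulr_ge0; first by apply: mulr_ge0; [apply: N_ge0 | apply: sqr_ge0].
  by rewrite invr_ge0; apply: mulr_ge0 => //; apply: ltW.
have [a0 Ha0] : exists a0, a0 \in B i :\ a.
  apply/set0Pn; rewrite -card_gt0.
  by move: Hk; rewrite (cardsD1 a) Ha.
have Hsub : forall j, c * #|remove B a j|%:R <= 1.
  move=> j; apply: le_trans (Hcb j); apply: ler_wpM2l; first exact: ltW.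
  rewrite ler_nat; apply: subset_leq_card; apply/subsetP => v; rewrite inE => /andP[].
  by [].
have {IH Hsub} IH := IH c c0 Hsub.
rewrite (D_split _ i) in IH; rewrite (D_split _ i).
have E1 : \sum_(j < n | j != i) Dj (remove B a) j / (#|remove B a j|%:R ^+ 2)
   = \sum_(j < n | j != i) Dj B j / (#|B j|%:R ^+ 2).
  apply: eq_bigr => j ji; rewrite -(Dj_other Hc) 1?eq_sym //.
  by rewrite remove_other // eq_sym.
rewrite E1 {E1} in IH.
set E := \sum_(j < n | j != i) _ in IH *.
rewrite /Dj remove_same in IH.
have Tinv : forall (S : {set Om i}) x (w : Om i), Tsum (upd x w) S = Tsum x S.
  by move=> S x w; rewrite Tsum_upd.
rewrite (@sumB' _ _ _ _ Ha0 (fun x => Tsum x (B i :\ a)) (Tinv _)) in IH.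
rewrite /N (@sumB' _ _ _ _ Ha0 (fun x => 1)) // in IH.
rewrite /Dj (@sumB _ _ _ _ Ha Ha0 (fun x => Tsum x (B i)) (Tinv _)).
rewrite /N (@sumB _ _ _ _ Ha Ha0 (fun x => 1)) //.
have Ek : #|B i|%:R = #|B i :\ a|%:R + 1 :> R by rewrite (cardsD1 a) Ha natrD addrC.
rewrite Ek.
rewrite (eq_bigr (fun x => Tsum x (B i :\ a) + 2 * U B a b x)); last first.
  by move=> x /andP[xB _]; apply: Tsum_split.
rewrite big_split /= -mulr_sumr.
have HY : \sum_(x | inbox B x && (x i == a0)) U B a b x <=
    #|B i :\ a|%:R * M ^+ 2 * \sum_(x | inbox B x && (x i == a0)) 1.
  rewrite mulr_sumr; apply: ler_sum => x /andP[xB _]; rewrite mulr1.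
  rewrite /U -(fa Hc Ha xB).
  apply: le_trans (ler_sum _ (fun z _ => sq_le (hf _) (hf (upd x z)))) _.
  by rewrite sumr_const -mulr_natl; lra.
have k1 : 1 <= #|B i :\ a|%:R :> R.
  by rewrite ler1n card_gt0; apply/set0Pn; exists a0.
have Hc1 := Hcb i; rewrite Ek in Hc1.
apply: (alg_step2 k1 c0 Hc1 _ _ HY IH).
- by apply: sumr_ge0 => x _; apply: Tsum_ge0.
- by apply: sumr_ge0.
Qed.

End Main.

End MC.
Import MC.

Module MD.
Import Order.TTheory GRing.Theory Num.Theory.
Local Open Scope ring_scope.

Section Final.
Variables (n : nat) (Om : 'I_n -> finType) (R : realFieldType).
Hypothesis Hne : forall i, (0 < #|Om i|)%N.


Lemma var_pair_gen (T : finType) (h : T -> R) : (0 < #|T|)%N ->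
  let m := (\sum_(y : T) h y) / #|T|%:R in
  (\sum_(y : T) (h y - m) ^+ 2) / #|T|%:R =
  (\sum_(y : T) \sum_(z : T) (h y - h z) ^+ 2) / (2 * #|T|%:R ^+ 2).
Proof.
move=> T0 m.
set A := \sum_y h y ^+ 2; set S := \sum_y h y; set k := #|T|%:R.
have E1 : \sum_y (h y - m) ^+ 2 = A - (S * m) *+ 2 + m ^+ 2 *+ #|T|.
  under eq_bigr do rewrite sqrrB.
  by rewrite big_split /= sumrB sumrMnl -big_distrl sumr_const.
have Ein : forall y, \sum_z (h y - h z) ^+ 2 = h y ^+ 2 *+ #|T| - (h y * S) *+ 2 + A.
  move=> y; under eq_bigr do rewrite sqrrB.
  rewrite big_split /= sumrB sumrMnl.
  have e1 : \sum_(z : T) h y * h z = h y * S by rewrite /S mulr_sumr.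
  have e2 : \sum_(z : T) h y ^+ 2 = h y ^+ 2 *+ #|T| by rewrite sumr_const.
  by rewrite e1 e2.
have E2 : \sum_y \sum_z (h y - h z) ^+ 2 = (A *+ #|T|) - (S * S) *+ 2 + A *+ #|T|.
  under eq_bigr do rewrite Ein.
  rewrite big_split /= sumrB !sumrMnl.
  have e1 : \sum_(y : T) h y * S = S * S by rewrite /S mulr_suml.
  have e2 : \sum_(y : T) A = A *+ #|T| by rewrite sumr_const.
  by rewrite e1 e2.
rewrite E1 E2 -[(S * m) *+ 2]mulr_natr -[m ^+ 2 *+ #|T|]mulr_natr.
rewrite -[A *+ #|T|]mulr_natr -[(S * S) *+ 2]mulr_natr -/k /m -/S -/k.
have k0 : k != 0 by rewrite pnatr_eq0 -lt0n.
by field.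
Qed.


Definition Bfull : forall j : 'I_n, {set Om j} := fun j => [set: Om j].

Lemma inbox_full x : inbox Bfull x.
Proof. by apply/forallP => j; rewrite in_setT. Qed.

Lemma AS_D (f : Omega Om -> R) :
  AS f = D f Bfull / (2 * N R Bfull).
Proof.
have EN : N R Bfull = #|Omega Om|%:R.
  by rewrite /N (eq_bigl xpredT) ?sumr_const // => x; rewrite inbox_full.
rewrite EN /AS /D mulr_suml; apply: eq_bigr => i _.
rewrite /Inf /Dj [in RHS](eq_bigl xpredT); last by move=> x; rewrite inbox_full.
have EV : forall x, Var_i f i x =
    (\sum_(y : Om i) \sum_(z : Om i) (f (upd x y) - f (upd x z)) ^+ 2) / (2 * #|Om i|%:R ^+ 2).
  by move=> x; rewrite /Var_i; apply: (var_pair_gen (fun y => f (upd x y)) (Hne i)).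
rewrite (eq_bigr _ (fun x _ => EV x)).
have ET : forall x, Tsum f x (Bfull i) =
    \sum_(y : Om i) \sum_(z : Om i) (f (upd x y) - f (upd x z)) ^+ 2.
  move=> x; rewrite /Tsum /Bfull (eq_bigl xpredT) => [|y]; last by rewrite in_setT.
  by apply: eq_bigr => y _; rewrite (eq_bigl xpredT) // => z; rewrite in_setT.
under [in RHS]eq_bigr do rewrite ET.
rewrite -mulr_suml /Bfull cardsT.
set S := \sum_x _.
rewrite !invfM; ring.
Qed.

Lemma kappa_ge j : (#|Om j|%:R - 1) / #|Om j|%:R <= kappa Om R.
Proof. rewrite /kappa; exact: le_bigmax. Qed.

Lemma kappa_lt1 : kappa Om R < 1.
Proof.
rewrite /kappa; apply: bigmax_lt => // i _.
have k0 : 0 < #|Om i|%:R :> R by rewrite ltr0n.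
by rewrite ltr_pdivrMr // mul1r; lra.
Qed.

Lemma part1 (f : Omega Om -> R) (M : R) : 0 <= M -> (forall x, 0 <= f x <= M) -> WNC f ->
  kappa Om R < 1 /\ AS f <= M ^+ 2 / (4 * (1 - kappa Om R)).
Proof.
move=> M0 hf Hw; split; first exact: kappa_lt1.
set c := 1 - kappa Om R.
have c0 : 0 < c by rewrite /c subr_gt0 kappa_lt1.
have Hcb : forall j, c * #|Bfull j|%:R <= 1.
  move=> j; rewrite /Bfull cardsT.
  have k0 : 0 < #|Om j|%:R :> R by rewrite ltr0n.
  have := kappa_ge j; rewrite ler_pdivrMr // => h.
  rewrite /c; nra.
have HD := main_WNC hf Hw c0 Hcb.
rewrite AS_D.
have N0 := N_ge0 R Bfull.
have M20 : 0 <= M ^+ 2 := sqr_ge0 M.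
have [->|Nn] := eqVneq (N R Bfull) 0.
  rewrite mulr0 invr0 mulr0; apply: divr_ge0 => //; lra.
have Np : 0 < N R Bfull by rewrite lt_def Nn.
apply: le_trans (ler_wpM2r _ HD) _.
  by rewrite invr_ge0; lra.
rewrite le_eqVlt; apply/orP; left; apply/eqP; field.
by apply/andP; split; apply/eqP; lra.
Qed.

End Final.

End MD.
Import MD.

Module ME.
Import Order.TTheory GRing.Theory Num.Theory.
Local Open Scope nat_scope.

Section WNCfacts.
Variables (n : nat) (Om : 'I_n -> finType) (R : realFieldType) (f : Omega Om -> R).
Implicit Types (x : Omega Om) (B : forall j : 'I_n, {set Om j}).

Lemma inbox_ext B B' x : (forall j, B j = B' j) -> inbox B x = inbox B' x.
Proof. by move=> E; apply: eq_forallb => j; rewrite E. Qed.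

Lemma WNC_ext B : WNC_on f B -> forall B', (forall j, B j = B' j) -> WNC_on f B'.
Proof.
elim => {B} [B H1|B i a b Hk Ha Hc _ IH] B' E.
  by apply: WNC_one => j; rewrite -E.
apply: (@WNC_step _ _ _ f B' i a b); rewrite -?E //.
  by move=> x xB; apply: Hc; rewrite (inbox_ext _ E).
by apply: IH => j; apply/setP => v; rewrite !inE E.
Qed.

Lemma sum_remove B i (a : Om i) : a \in B i ->
  (\sum_(j < n) #|remove B a j|).+1 = \sum_(j < n) #|B j|.
Proof.
move=> Ha; rewrite (bigD1 i) //= [RHS](bigD1 i) //= remove_same (cardsD1 a (B i)) Ha.
have E : \sum_(j < n | j != i) #|remove B a j| = \sum_(j < n | j != i) #|B j|.
  by apply: eq_bigr => j ji; rewrite remove_other // eq_sym.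
by rewrite E add1n addSn.
Qed.

Lemma const_WNC b : forall m B, (\sum_(j < n) #|B j| <= m)%N ->
  (forall j, 0 < #|B j|)%N -> (forall x, inbox B x -> f x = b) -> WNC_on f B.
Proof.
elim => [|m IH] B Hm Hne Hc.
  case: (boolP [forall j, #|B j| == 1%N]) => [/forallP H|/forallPn [j Hj]].
    by apply: WNC_one => j; apply/eqP.
  exfalso; have := Hne j; move: Hm; rewrite (bigD1 j) //=; lia.
case: (boolP [forall j, #|B j| == 1%N]) => [/forallP H|/forallPn [j Hj]].
  by apply: WNC_one => j; apply/eqP.
have Hk : (1 < #|B j|)%N by have := Hne j; move/negP: Hj; lia.
have [a Ha] : exists a, a \in B j by apply/set0Pn; rewrite -card_gt0.
apply: (WNC_step (a := a) (b := b)) => //.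
  by move=> x xB _; apply: Hc.
apply: IH.
- by move: Hm; rewrite -(sum_remove Ha).
- move=> j'; case: (eqVneq j j') => [<-|jj']; last by rewrite remove_other.
  by rewrite remove_same; move: Hk; rewrite (cardsD1 a) Ha; lia.
- by move=> x; rewrite inbox_remove => /andP[/Hc].
Qed.


Lemma peel i (S : {set Om i}) b : forall m B, #|B i :&: S| = m ->
  (forall j, 0 < #|B j|) -> (forall x, inbox B x -> x i \in S -> f x = b) ->
  (B i :\: S != set0 -> WNC_on f (dfwith B (B i :\: S))) -> WNC_on f B.
Proof.
elim => [|m IH] B Hm Hne Hc Hrest.
  have E : B i :\: S = B i.
    apply/setP => v; rewrite !inE; case: (boolP (v \in B i)) => vB; rewrite ?andbF ?andbT //.
    apply/negP => vS; move/eqP: Hm; rewrite cards_eq0 => /eqP H.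
    have : v \in B i :&: S by rewrite inE vB vS.
    by rewrite H inE.
  have HX : B i :\: S != set0 by rewrite E -card_gt0.
  apply: (WNC_ext (Hrest HX)) => j.
  by case: (dfwithP B (B i :\: S) j).
have [a Ha] : exists a, a \in B i :&: S by apply/set0Pn; rewrite -card_gt0 Hm.
move: (Ha); rewrite inE => /andP[aB aS].
case: (ltnP 1 #|B i|) => Hk; last first.
  apply: (const_WNC (b := b) (leqnn _)) => // x xB; apply: Hc => //.
  have /cards1P [v Ev] : #|B i| == 1 by have := Hne i; lia.
  have := inbox_i i xB; move: aB; rewrite Ev !inE => /eqP av /eqP ->; rewrite -av.
  exact: aS.
apply: (@WNC_step _ _ _ f B i a b Hk aB).
  by move=> x xB xa; apply: Hc; rewrite ?xa.
apply: IH.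
- apply/eqP; rewrite -eqSS -Hm (cardsD1 a (B i :&: S)) Ha add1n eqSS remove_same.
  apply/eqP; apply: eq_card => v; rewrite !inE; by case: (v == a); case: (v \in B i).
- move=> j'; case: (eqVneq i j') => [<-|jj']; last by rewrite remove_other.
  by rewrite remove_same; move: Hk; rewrite (cardsD1 a) aB; lia.
- by move=> x; rewrite inbox_remove => /andP[/Hc].
- have E : remove B a i :\: S = B i :\: S.
    apply/setP => v; rewrite remove_same !inE.
    by case: (eqVneq v a) => [->|]; rewrite ?aS.
  rewrite E => H; apply: (WNC_ext (Hrest H)) => j.
  case: (dfwithP B (B i :\: S) j) => [|j' ij]; first by rewrite dfwith_in.
  by rewrite dfwith_out // remove_other.
Qed.

End WNCfacts.

End ME.
Import ME.

Module MF.
Import Order.TTheory GRing.Theory Num.Theory.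
Local Open Scope nat_scope.

Section NCsec.
Variables (n k : nat) (R : realFieldType).
Hypothesis k2 : 2 <= k.
Variable g : cube n k -> 'I_k.
Let f := (fun x : cube n k => ((g x : nat)%:R : R)%R).
Variables (sigma : 'S_n) (A : 'I_n -> {set 'I_k}) (c : 'I_n.+1 -> 'I_k).
Hypothesis Hr : forall (r : 'I_n) (x : cube n k),
        (forall s : 'I_n, (s < r)%N -> x (sigma s) \notin A s) ->
        x (sigma r) \in A r -> g x = c (widen_ord (leqnSn n) r).
Hypothesis Hlast : forall x : cube n k, (forall r : 'I_n, x (sigma r) \notin A r) -> g x = c ord_max.

Definition Box (r : nat) : forall j : 'I_n, {set 'I_k} :=
  fun j => if (sigma^-1)%g j < r then ~: A ((sigma^-1)%g j) else setT.

Lemma box_notin r x (s : 'I_n) : inbox (Box r) x -> s < r -> x (sigma s) \notin A s.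
Proof.
move=> /forallP /(_ (sigma s)); rewrite /Box permK => + sr; rewrite sr inE //.
Qed.

Lemma stage d : d <= n -> (forall j, 0 < #|Box (n - d) j|) -> WNC_on f (Box (n - d)).
Proof.
elim: d => [|d IH] dn Hne.
  rewrite subn0 in Hne *.
  apply: (const_WNC (b := ((c ord_max : nat)%:R : R)%R) (leqnn _)) => // x xB.
  by rewrite /f Hlast // => r; apply: (box_notin xB).
have rn : n - d.+1 < n by lia.
set r' : 'I_n := Ordinal rn.
have Ei : Box (n - d.+1) (sigma r') = setT by rewrite /Box permK /= ltnn.
apply: (@peel _ _ R f (sigma r') (A r') ((c (widen_ord (leqnSn n) r') : nat)%:R : R)%R
   _ (Box (n - d.+1)) (erefl _)) => //.
- move=> x xB xA; rewrite /f (Hr (r := r')) // => s sr.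
  exact: (box_notin xB).
- rewrite Ei => HA.
  have EB : forall j, @dfwith _ _ (Box (n - d.+1)) (sigma r') (setT :\: A r') j = Box (n - d) j.
    move=> j; case: (@dfwithP _ _ (Box (n - d.+1)) (sigma r') (setT :\: A r') j) => [|j' ij].
      by rewrite /Box permK /= ifT; [apply/setP => v; rewrite !inE andbT|lia].
    rewrite /Box; have : (sigma^-1)%g j' != r'.
      by apply: contra ij => /eqP <-; rewrite permKV.
    move=> /eqP ne; have ne' : nat_of_ord ((sigma^-1)%g j') != nat_of_ord r'.
      by apply/eqP => E; apply: ne; apply: val_inj.
    rewrite /= in ne'; have -> : ((sigma^-1)%g j' < n - d) = ((sigma^-1)%g j' < n - d.+1) by lia.
    by [].
  apply: (WNC_ext (IH (ltnW dn) _)) => [j|j]; last by rewrite EB.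
  rewrite -EB; case: (@dfwithP _ _ (Box (n - d.+1)) (sigma r') (setT :\: A r') j) => [|j' ij].
    by rewrite card_gt0.
  exact: Hne.
Qed.

End NCsec.

Lemma NC_WNC (n k : nat) (R : realFieldType) (g : cube n k -> 'I_k) : 2 <= k -> NC g ->
  WNC (fun x : cube n k => ((g x : nat)%:R : R)%R).
Proof.
move=> k2 [sigma [A [c [_ [_ [Hr Hlast]]]]]].
have H := stage R k2 (d := n) Hr Hlast (leqnn n).
rewrite subnn in H.
have E : forall j, Box sigma A 0 j = [set: 'I_k] by move=> j; rewrite /Box ltn0.
apply: (WNC_ext (H _)) => j; rewrite E // cardsT card_ord; lia.
Qed.

End MF.
Import MF.

Local Open Scope ring_scope.
Theorem theorem1 (R : realFieldType) (n : nat) (hn : (1 <= n)%N) :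
  (forall (Om : 'I_n -> finType), (forall i, 0 < #|Om i|)%N ->
   forall (M : R) (f : Omega Om -> R),
     0 <= M -> (forall x, 0 <= f x <= M) -> WNC f ->
     kappa Om R < 1 /\ AS f <= M ^+ 2 / (4 * (1 - kappa Om R)))
  /\
  (forall (k : nat), (2 <= k)%N -> forall g : cube n k -> 'I_k, NC g ->
     AS (fun x => ((g x : nat)%:R : R))
       <= (k%:R - 1) ^+ 2 / (4 * (1 - (k%:R - 1) / k%:R))).
Proof.
split.
  by move=> Om Hne M f M0 hf Hw; apply: part1.
move=> k k2 g Hg.
have Hne : forall i : 'I_n, (0 < #|(fun _ : 'I_n => 'I_k) i|)%N.
  by move=> i; rewrite card_ord; lia.
have k0 : 0 < k%:R :> R by rewrite ltr0n; lia.
have k1 : 1 <= k%:R :> R by rewrite ler1n; lia.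
have hf : forall x : cube n k, 0 <= ((g x : nat)%:R : R) <= k%:R - 1.
  move=> x; rewrite ler0n /=; have := ltn_ord (g x).
  by move=> h; rewrite lerBrDr -[1 in X in X <= _]/(1%:R) -natrD ler_nat; lia.
have M0 : 0 <= k%:R - 1 :> R by rewrite subr_ge0.
have [_ H] := part1 Hne M0 hf (NC_WNC R k2 Hg).
set v := (k%:R - 1) / k%:R.
have Ek : kappa (fun _ : 'I_n => 'I_k) R = v.
  apply/eqP; rewrite eq_le; apply/andP; split.
    rewrite /kappa; apply: bigmax_le => [|i _]; rewrite ?card_ord //.
    by rewrite /v divr_ge0 // ltW.
  have := kappa_ge (fun _ : 'I_n => 'I_k) R (Ordinal hn).
  by rewrite card_ord.
by rewrite Ek in H.
Qed.
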